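(* Let $H$ and $G$ be as in the construction described in the context. If $H$ is linearly orderable, then so is $G$.
   Context: A group is linearly orderable if it admits a linear order $\le$ such that $g_1\le g_2$ implies $g_1x\le g_2x$ and $xg_1\le xg_2$ for all $x$. Construction: $H$ is a group generated by a countable set $\{a^{(1)},a^{(2)},\ldots\}$. For groups $A,B$, the wreath product $A\,\mathrm{Wr}\,B$ is the semidirect product $A^B\rtimes B$, where $A^B$ is the group of all functions $B\to A$ with pointwise multiplication and $B$ acts by $(bf)(x)=f(xb)$. Let $Z=\langle z\rangle$ be infinite cyclic and let $b^{(i)}\in H^Z$ be given by $b^{(i)}(z^k)=a^{(i)}$ if $k>0$ and $b^{(i)}(z^k)=1$ otherwise. Let $K=\langle z,b^{(i)}\ (i\in\mathbb{N})\rangle\le H\,\mathrm{Wr}\,Z$. Let $\langle s\rangle$ be infinite cyclic and let $c\in K^{\langle s\rangle}$ be given by $c(s)=z$, $c(s^{2^i})=b^{(i)}$ for $i>0$, and $c(s^k)=1$ otherwise. Let $G=\langle c,s\rangle\le K\,\mathrm{Wr}\,\langle s\rangle$. *)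

(* Defs.v *)
From mathcomp Require Import all_boot all_order all_algebra.
Set Implicit Arguments. Unset Strict Implicit. Unset Printing Implicit Defensive.
Import GRing.Theory Num.Theory.
Local Open Scope ring_scope.

Definition is_group (T : Type) (mul : T -> T -> T) (one : T) (inv : T -> T) : Prop :=
  (forall x y z, mul x (mul y z) = mul (mul x y) z) /\
  (forall x, mul one x = x) /\ (forall x, mul x one = x) /\
  (forall x, mul (inv x) x = one) /\ (forall x, mul x (inv x) = one).

Definition gen (T : Type) (mul : T -> T -> T) (one : T) (inv : T -> T)
    (S : T -> Prop) (x : T) : Prop :=
  forall P : T -> Prop, P one -> (forall u v, P u -> P v -> P (mul u v)) ->
    (forall u, P u -> P (inv u)) -> (forall u, S u -> P u) -> P x.

Definition lin_orderable (T : Type) (mul : T -> T -> T) (P : T -> Prop) : Prop :=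
  exists le : T -> T -> Prop,
    (forall x, P x -> le x x) /\
    (forall x y, P x -> P y -> le x y -> le y x -> x = y) /\
    (forall x y z, P x -> P y -> P z -> le x y -> le y z -> le x z) /\
    (forall x y, P x -> P y -> le x y \/ le y x) /\
    (forall g1 g2 x, P g1 -> P g2 -> P x -> le g1 g2 ->
       le (mul g1 x) (mul g2 x) /\ le (mul x g1) (mul x g2)).

(* Wreath product A Wr Z = A^Z ⋊ Z, Z infinite cyclic written additively as int.
   An element (f, b) stands for the product f·z^b; the action is (b f)(x) = f(x b),
   i.e. (b f)(x) = f (x + b). *)
Definition wr (A : Type) : Type := ((int -> A) * int)%type.

Definition wr_mul (A : Type) (mul : A -> A -> A) (u v : wr A) : wr A :=
  (fun x => mul (u.1 x) (v.1 (x + u.2)), u.2 + v.2).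

Definition wr_one (A : Type) (one : A) : wr A := (fun _ => one, 0).

Definition wr_inv (A : Type) (inv : A -> A) (u : wr A) : wr A :=
  (fun x => inv (u.1 (x - u.2)), - u.2).

Section Construction.
Variables (H : Type) (mul : H -> H -> H) (one : H) (inv : H -> H) (a : nat -> H).

Definition zK : wr H := (fun _ => one, 1).
Definition bK (i : nat) : wr H := (fun k => if 0 < k then a i else one, 0).

Definition K_set : wr H -> Prop :=
  gen (wr_mul mul) (wr_one one) (wr_inv inv)
      (fun x => x = zK \/ exists i : nat, (0 < i)%N /\ x = bK i).

(* c : <s> -> K, c(s) = z, c(s^(2^i)) = b^(i) for i > 0, c(s^k) = 1 otherwise *)
Definition c_fun (k : int) : wr H :=
  match k with
  | Posz n =>
      if n == 1%N then zK
      else if (1 < n)%N && (n == 2 ^ trunc_log 2 n)%N then bK (trunc_log 2 n)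
      else wr_one one
  | Negz _ => wr_one one
  end.

Definition cG : wr (wr H) := (c_fun, 0).
Definition sG : wr (wr H) := (fun _ => wr_one one, 1).

Definition G_set : wr (wr H) -> Prop :=
  gen (wr_mul (wr_mul mul)) (wr_one (wr_one one)) (wr_inv (wr_inv inv))
      (fun x => x = cG \/ x = sG).
End Construction.

(* Main.v *)
Require Import Defs.
From mathcomp Require Import all_boot all_order all_algebra zify.
From Stdlib Require Import Classical FunctionalExtensionality.
Import GRing.Theory Num.Theory.
Local Open Scope ring_scope.
Set Implicit Arguments. Unset Strict Implicit.

Lemma int_min (P : int -> Prop) (N : int) :
  (forall x, P x -> N <= x) -> forall x, P x -> exists m, P m /\ forall y, y < m -> ~ P y.
Proof.
move=> hN.
suff: forall n : nat, forall x, x <= N + n%:Z -> P x -> exists m, P m /\ forall y, y < m -> ~ P y.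
  move=> h x Px; apply: (h `|x - N|%N x) => //; have := hN x Px; lia.
elim=> [|n IH] x hx Px.
  exists x; split => // y hy Py; have := hN y Py; lia.
case: (classic (exists y, y < x /\ P y)) => [[y [hy Py]]|hno].
  apply: (IH y) => //; lia.
exists x; split => // y hy Py; apply: hno; exists y; split => //.
Qed.

Lemma wr_group (A : Type) (mul : A -> A -> A) (one : A) (inv : A -> A) :
  is_group mul one inv -> is_group (wr_mul mul) (wr_one one) (wr_inv inv).
Proof.
case=> [hA [h1l [h1r [hVl hVr]]]].
split; [|split; [|split; [|split]]].
- move=> [f b] [g c] [h d]; rewrite /wr_mul /=; congr pair; last by rewrite addrA.
  by apply: functional_extensionality => x; rewrite hA addrA.
- move=> [f b]; rewrite /wr_mul /wr_one /=; congr pair; last by rewrite add0r.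
  by apply: functional_extensionality => x; rewrite h1l addr0.
- move=> [f b]; rewrite /wr_mul /wr_one /=; congr pair; last by rewrite addr0.
  by apply: functional_extensionality => x; rewrite h1r.
- move=> [f b]; rewrite /wr_mul /wr_one /wr_inv /=; congr pair; last by rewrite addNr.
  by apply: functional_extensionality => x; rewrite hVl.
- move=> [f b]; rewrite /wr_mul /wr_one /wr_inv /=; congr pair; last by rewrite addrN.
  by apply: functional_extensionality => x; rewrite addrK hVr.
Qed.

Definition Qw (A : Type) (one : A) (P : A -> Prop) (u : wr A) : Prop :=
  (forall x, P (u.1 x)) /\ exists N, forall x, x < N -> u.1 x = one.

Definition lew (A : Type) (le : A -> A -> Prop) (u v : wr A) : Prop :=
  u.2 < v.2 \/ (u.2 = v.2 /\ (u.1 = v.1 \/ exists m, (forall y, y < m -> u.1 y = v.1 y)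
     /\ le (u.1 m) (v.1 m) /\ u.1 m <> v.1 m)).

Lemma wr_lin (A : Type) (mul : A -> A -> A) (one : A) (inv : A -> A) (P : A -> Prop) :
  is_group mul one inv -> lin_orderable mul P -> lin_orderable (wr_mul mul) (Qw one P).
Proof.
case=> [hA [h1l [h1r [hVl hVr]]]].
have canr : forall x y z, mul x z = mul y z -> x = y.
  move=> x y z e; rewrite -(h1r x) -(h1r y) -(hVr z) !hA e //.
have canl : forall x y z, mul z x = mul z y -> x = y.
  move=> x y z e; rewrite -(h1l x) -(h1l y) -(hVl z) -!hA e //.
case=> le [lrefl [lanti [ltrans [ltot lcomp]]]].
exists (lew le).
split; [|split; [|split; [|split]]].
- by move=> u _; right; split => //; left.
- move=> [f b] [g c] [Pf _] [Pg _] /=.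
  rewrite /lew /= => [[h1|[e1 h1]]] [h2|[e2 h2]]; try lia.
  subst c; congr pair.
  case: h1 => [//|[m1 [hm1 [l1 n1]]]].
  case: h2 => [e|[m2 [hm2 [l2 n2]]]]; first by subst g.
  exfalso.
  have [lt12|[lt21|eq12]] : m1 < m2 \/ m2 < m1 \/ m1 = m2 by lia.
  + by apply: n1; rewrite hm2.
  + by apply: n2; rewrite hm1.
  + subst m2; apply: n1; exact: lanti.
- move=> [f b] [g c] [h d] [Pf _] [Pg _] [Ph _].
  rewrite /lew /= => [[h1|[e1 h1]]] [h2|[e2 h2]]; try (left; lia).
  right; split; first by rewrite e1 e2.
  case: h1 => [e|[m1 [hm1 [l1 n1]]]]; first by subst g.
  case: h2 => [e|[m2 [hm2 [l2 n2]]]]; first by subst h; right; exists m1.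
  right.
  have [lt12|[lt21|eq12]] : m1 < m2 \/ m2 < m1 \/ m1 = m2 by lia.
  + exists m1; split; first by move=> y hy; rewrite hm1 // hm2 //; lia.
    by rewrite -(hm2 m1 lt12).
  + exists m2; split; first by move=> y hy; rewrite hm1 ?hm2 //; lia.
    by rewrite (hm1 m2 lt21).
  + subst m2; exists m1; split; first by move=> y hy; rewrite hm1 ?hm2.
    split; first exact: (ltrans _ _ _ (Pf m1) (Pg m1) (Ph m1)).
    move=> e; apply: n1; apply: lanti => //; by rewrite e.
- move=> [f b] [g c] [Pf [Nf hf]] [Pg [Ng hg]]; rewrite /lew /=.
  have [lt|[gt|eq]] : b < c \/ c < b \/ b = c by lia.
  + by left; left.
  + by right; left.
  subst c.
  case: (classic (f = g)) => [e|ne]; first by left; right; split => //; left.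
  have [x0 hx0] : exists x, f x <> g x.
    apply: not_all_ex_not => hall; apply: ne; exact: functional_extensionality.
  have [N [hN1 hN2]] : exists N, N <= Nf /\ N <= Ng.
    case: (lerP Nf Ng) => h; [exists Nf | exists Ng]; lia.
  have hb : forall x, f x <> g x -> N <= x.
    move=> x hx; case: (lerP N x) => // hlt; exfalso; apply: hx.
    have e1 := hf x; have e2 := hg x; simpl in e1, e2; rewrite e1 ?e2 //; lia.
  have [m [hm hmin]] := int_min hb hx0.
  have agree : forall y, y < m -> f y = g y.
    by move=> y hy; apply: NNPP => hn; exact: (hmin y hy hn).
  case: (ltot _ _ (Pf m) (Pg m)) => hl.
  + left; right; split => //; right; exists m; split => //.
  + right; right; split => //; right; exists m; split; last by split => // e; apply: hm.
    by move=> y hy; rewrite agree.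
- move=> [f b] [g c] [h d] [Pf _] [Pg _] [Ph _]; rewrite /lew /wr_mul /=.
  move=> [hl|[e1 hl]].
    split; left; lia.
  subst c; case: hl => [e|[m [hm [l n]]]].
    by subst g; split; right; split => //; left.
  split; right; split => //; right.
  + exists m; split; first by move=> y hy; rewrite hm.
    split; first by have [] := lcomp _ _ _ (Pf m) (Pg m) (Ph (m + b)) l.
    by move=> e; apply: n; apply: canr e.
  + exists (m - d); split; first by move=> y hy; rewrite hm //; lia.
    rewrite subrK; split; first by have [] := lcomp _ _ _ (Pf m) (Pg m) (Ph (m - d)) l.
    by move=> e; apply: n; apply: canl e.
Qed.

Lemma lin_restrict (T : Type) (mul : T -> T -> T) (P P' : T -> Prop) :
  lin_orderable mul P -> (forall x, P' x -> P x) -> lin_orderable mul P'.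
Proof.
case=> le [h1 [h2 [h3 [h4 h5]]]] hP; exists le.
split; [|split; [|split; [|split]]].
- by move=> x /hP; apply: h1.
- by move=> x y /hP px /hP py; apply: h2.
- by move=> x y z /hP px /hP py /hP pz; apply: h3.
- by move=> x y /hP px /hP py; apply: h4.
- by move=> g1 g2 x /hP p1 /hP p2 /hP p3; apply: h5.
Qed.

Lemma Qw_gen (A : Type) (mul : A -> A -> A) (one : A) (inv : A -> A) (P : A -> Prop)
  (S : wr A -> Prop) :
  is_group mul one inv -> P one -> (forall x y, P x -> P y -> P (mul x y)) ->
  (forall x, P x -> P (inv x)) -> (forall u, S u -> Qw one P u) ->
  forall u, gen (wr_mul mul) (wr_one one) (wr_inv inv) S u -> Qw one P u.
Proof.
case=> [hA [h1l [h1r [hVl hVr]]]] P1 PM PI hS u hu.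
have inv1 : inv one = one by rewrite -{2}(hVl one) h1r.
apply: hu => //.
- by split => //; exists 0.
- move=> [f b] [g c] [Pf [Nf hf]] [Pg [Ng hg]]; rewrite /wr_mul /=; simpl in *.
  split; first by move=> x; apply: PM.
  have [N [hN1 hN2]] : exists N, N <= Nf /\ N <= Ng - b.
    case: (lerP Nf (Ng - b)) => h; [exists Nf | exists (Ng - b)]; lia.
  exists N => x hx /=;
  rewrite hf ?hg ?h1l //; lia.
- move=> [f b] [Pf [Nf hf]]; rewrite /wr_inv /=; simpl in *.
  split; first by move=> x; apply: PI.
  exists (Nf + b) => x hx /=; rewrite hf ?inv1 //; lia.
Qed.

Theorem corollary4 (H : Type) (mul : H -> H -> H) (one : H) (inv : H -> H)
  (hgrp : is_group mul one inv) (a : nat -> H)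
  (hgen : forall h : H, gen mul one inv (fun x => exists i : nat, (0 < i)%N /\ x = a i) h)
  (hord : lin_orderable mul (fun _ => True)) :
  lin_orderable (wr_mul (wr_mul mul)) (G_set mul one inv a).
Proof.
have hK : lin_orderable (wr_mul mul) (K_set mul one inv a).
  apply: lin_restrict (wr_lin hgrp hord) _.
  apply: Qw_gen => //.
  move=> u [->|[i [_ ->]]]; (split; [by [] | exists 0 => x hx /=]) => //.
  by case: ifP => //; lia.
have hL := wr_lin (wr_group hgrp) hK.
apply: lin_restrict hL _.
have K1 : K_set mul one inv a (wr_one one) by move=> P h1 *.
apply: Qw_gen.
- exact: wr_group.
- exact: K1.
- move=> x y Kx Ky P h1 hm hi hs; apply: (hm); [exact: (Kx P h1 hm hi hs) | exact: (Ky P h1 hm hi hs)].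
- move=> x Kx P h1 hm hi hs; apply: (hi); exact: (Kx P h1 hm hi hs).
- move=> u [->|->]; last by split => //; exists 0.
  split; last by exists 0 => -[n|n] //=; lia.
  move=> [n|n] /=; last exact: K1.
  case: ifP => [_|_]; first by move=> P h1 hm hi hs; apply: hs; left.
  case: ifP => [/andP [hn _]|_]; last exact: K1.
  move=> P h1 hm hi hs; apply: hs; right; exists (trunc_log 2 n); split => //.
  by rewrite trunc_log_gt0.
Qed.
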